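(* Let $A=P+\Xi$ be real $m\times n$ matrices and let $J$ be a rectangular index set. Denote by $(\hat u,\hat v)$ and $(u,v)$ the pairs of (unit) singular vectors of $\Pi_J(A)$ and $\Pi_J(P)$, respectively, corresponding to their largest singular values. Then $$\|\Pi_{u,v}(\Pi_J(P))-P\|_F\le\|\Pi_{\hat u,\hat v}(\Pi_J(P))-P\|_F\le\|\Pi_{\hat u,\hat v}(\Pi_J(A))-P\|_F .$$
   Context: For unit vectors $u,v$ and a matrix $X$, $\Pi_{u,v}(X)=(uu^T)X(vv^T)$. A rectangular index set is $J=J_1\times J_2$ with $J_1$ a set of row indices and $J_2$ a set of column indices; $\Pi_J(X)$ is the matrix that agrees with $X$ on $J$ and is zero outside $J$. *)

(* Defs.v *)
From HB Require Import structures.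
From mathcomp Require Import all_boot all_order all_algebra.
From mathcomp Require Import reals.
Set Implicit Arguments. Unset Strict Implicit. Unset Printing Implicit Defensive.
Import Order.TTheory GRing.Theory Num.Theory.
Local Open Scope ring_scope.

Section Defs.
Variable R : realType.

Definition frob (m n : nat) (X : 'M[R]_(m, n)) : R :=
  Num.sqrt (\sum_(i < m) \sum_(j < n) X i j ^+ 2).

Definition unit_vec (k : nat) (u : 'cV[R]_k) : Prop :=
  \sum_(i < k) u i 0 ^+ 2 = 1.

Definition Pi_uv (m n : nat) (u : 'cV[R]_m) (v : 'cV[R]_n) (X : 'M[R]_(m, n))
  : 'M[R]_(m, n) := (u *m u^T) *m X *m (v *m v^T).

Definition Pi_J (m n : nat) (J1 : {set 'I_m}) (J2 : {set 'I_n})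
  (X : 'M[R]_(m, n)) : 'M[R]_(m, n) :=
  \matrix_(i, j) (if (i \in J1) && (j \in J2) then X i j else 0).

Definition sing_triple (m n : nat) (X : 'M[R]_(m, n)) (s : R)
  (u : 'cV[R]_m) (v : 'cV[R]_n) : Prop :=
  [/\ 0 < s, unit_vec u, unit_vec v, X *m v = s *: u & X^T *m u = s *: v].

Definition top_sing_pair (m n : nat) (X : 'M[R]_(m, n))
  (u : 'cV[R]_m) (v : 'cV[R]_n) : Prop :=
  exists s, sing_triple X s u v /\
    forall s' a b, sing_triple X s' a b -> s' <= s.
End Defs.

(* Main.v *)
Require Import Defs.
From HB Require Import structures.
From mathcomp Require Import all_boot all_order all_algebra.
From mathcomp Require Import reals.
From mathcomp Require Import all_classical topology normedtype derive.
From mathcomp Require Import ring lra.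
Import Order.TTheory GRing.Theory Num.Theory.
Import numFieldNormedType.Exports.
Set Implicit Arguments. Unset Strict Implicit. Unset Printing Implicit Defensive.
Local Open Scope classical_set_scope.
Local Open Scope ring_scope.
Lemma cont_sum (R : realType) (T : topologicalType) (I : Type) (r : seq I)
  (F : I -> T -> R) :
  (forall i, continuous (F i)) -> continuous (fun x => \sum_(i <- r) F i x).
Proof.
move=> Fc; elim: r => [|a r IH].
  by under eq_fun do rewrite big_nil; apply: cst_continuous.
under eq_fun do rewrite big_cons.
by move=> x; apply: continuousD; [apply: Fc | apply: IH].
Qed.

Lemma exists_max_rV (R : realType) k n (Q : 'M[R]_(k, n)) : (0 < n)%N ->
  exists r0 : 'rV[R]_n, \sum_i r0 0 i ^+ 2 = 1 /\
   forall r : 'rV[R]_n, \sum_i r 0 i ^+ 2 = 1 ->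
     \sum_a (\sum_j Q a j * r 0 j) ^+ 2 <= \sum_a (\sum_j Q a j * r0 0 j) ^+ 2.
Proof.
move=> n0.
pose S := [set r : 'rV[R]_n | \sum_i r 0 i ^+ 2 = 1].
pose f := fun r : 'rV[R]_n => \sum_a (\sum_j Q a j * r 0 j) ^+ 2.
have cg : continuous (fun r : 'rV[R]_n => \sum_i r 0 i ^+ 2).
  apply: cont_sum => i; under eq_fun do rewrite expr2.
  by move=> x; apply: continuousM; apply: coord_continuous.
have cf : continuous f.
  apply: cont_sum => a; under eq_fun do rewrite expr2; move=> x.
  have ca : continuous (fun r : 'rV[R]_n => \sum_j Q a j * r 0 j).
    apply: cont_sum => j y; apply: continuousM; first exact: cst_continuous.
    exact: coord_continuous.
  by apply: continuousM; apply: ca.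
have S0 : S !=set0.
  exists (\row_j (if j == Ordinal n0 then 1 else 0)); rewrite /S /=.
  rewrite (bigD1 (Ordinal n0)) //= big1 ?mxE ?eqxx ?expr1n ?addr0 // => i /negPf.
  by rewrite mxE => ->; rewrite expr0n.
have Sc : compact S.
  apply: bounded_closed_compact.
    exists 1; split => // M M1 x Sx.
    rewrite /= [leLHS]/Num.norm /= mx_normrE; apply: bigmax_le => [|[i j] _]; first lra.
    rewrite /= (ord1 i); suff : `|x 0 j| <= 1 by lra.
    have : x 0 j ^+ 2 <= 1.
      rewrite -Sx (bigD1 j) //= lerDl; apply: sumr_ge0 => l _; exact: sqr_ge0.
    rewrite ler_norml => h; apply/andP; split; nra.
  have -> : S = (fun r : 'rV[R]_n => \sum_i r 0 i ^+ 2) @^-1` [set 1].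
    by [].
  by move: cg => /continuous_closedP; apply; apply: closed_eq.
have [r0 r0S r0max] := compact_EVT_max S0 Sc (continuous_subspaceT cf).
exists r0; split; first by move: r0S; rewrite inE.
by move=> r rS; apply: r0max; rewrite inE.
Qed.
Local Close Scope classical_set_scope.
Definition bil (R : realType) k (x y : 'cV[R]_k) : R := \sum_i x i 0 * y i 0.

Lemma bilC (R : realType) k (x y : 'cV[R]_k) : bil x y = bil y x.
Proof. by apply: eq_bigr => i _; rewrite mulrC. Qed.

Lemma bilDl (R : realType) k (x y z : 'cV[R]_k) : bil (x + y) z = bil x z + bil y z.
Proof. by rewrite /bil -big_split; apply: eq_bigr => i _; rewrite !mxE mulrDl. Qed.

Lemma bilDr (R : realType) k (x y z : 'cV[R]_k) : bil z (x + y) = bil z x + bil z y.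
Proof. by rewrite /bil -big_split; apply: eq_bigr => i _; rewrite !mxE mulrDr. Qed.

Lemma bilBl (R : realType) k (x y z : 'cV[R]_k) : bil (x - y) z = bil x z - bil y z.
Proof. by rewrite /bil -sumrB; apply: eq_bigr => i _; rewrite !mxE mulrBl. Qed.

Lemma bilBr (R : realType) k (x y z : 'cV[R]_k) : bil z (x - y) = bil z x - bil z y.
Proof. by rewrite /bil -sumrB; apply: eq_bigr => i _; rewrite !mxE mulrBr. Qed.

Lemma bilZl (R : realType) k (c : R) (x z : 'cV[R]_k) : bil (c *: x) z = c * bil x z.
Proof. by rewrite /bil mulr_sumr; apply: eq_bigr => i _; rewrite !mxE mulrA. Qed.

Lemma bilZr (R : realType) k (c : R) (x z : 'cV[R]_k) : bil z (c *: x) = c * bil z x.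
Proof. by rewrite /bil mulr_sumr; apply: eq_bigr => i _; rewrite !mxE mulrCA. Qed.

Lemma bilM (R : realType) k n (M : 'M[R]_(k, n)) (x : 'cV[R]_k) (y : 'cV[R]_n) :
  bil x (M *m y) = bil (M^T *m x) y.
Proof.
rewrite /bil; under eq_bigr do rewrite mxE mulr_sumr.
rewrite exchange_big /=; apply: eq_bigr => j _; rewrite mxE mulr_suml.
by apply: eq_bigr => i _; rewrite !mxE; ring.
Qed.

Lemma bil_ge0 (R : realType) k (x : 'cV[R]_k) : 0 <= bil x x.
Proof. by apply: sumr_ge0 => i _; rewrite -expr2 sqr_ge0. Qed.

Lemma bil_eq0 (R : realType) k (x : 'cV[R]_k) : bil x x = 0 -> x = 0.
Proof.
move=> h; apply/matrixP => i j; rewrite (ord1 j) mxE.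
have /psumr_eq0P h2 : \sum_i x i 0 ^+ 2 = 0 by rewrite -[RHS]h; apply: eq_bigr => l _; rewrite expr2.
have := h2 (fun i _ => sqr_ge0 (x i 0)) i isT.
by move/eqP; rewrite sqrf_eq0 => /eqP.
Qed.

Lemma unitE (R : realType) k (x : 'cV[R]_k) : unit_vec x <-> bil x x = 1.
Proof.
rewrite /unit_vec /bil; have -> : \sum_i x i 0 ^+ 2 = \sum_i x i 0 * x i 0.
  by apply: eq_bigr => i _; rewrite expr2.
by [].
Qed.

Lemma quad0 (R : realType) (a b : R) : (forall t, a * t + b * t ^+ 2 <= 0) -> a = 0.
Proof.
move=> H; pose d := `|b| + 1; pose t := a / d.
have d0 : 0 < d by rewrite /d; have := normr_ge0 b; lra.
have td : t * d = a by rewrite /t mulfVK // gt_eqF.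
have db : 1 <= d + b by rewrite /d; have := ler_norm (- b); rewrite normrN; lra.
have h := H t.
have : t ^+ 2 * (d + b) <= 0 by rewrite -td in h; nra.
move=> h2; have : t = 0 by nra.
by move=> t0; rewrite -td t0 mul0r.
Qed.

Lemma CS (R : realType) k (a b : 'cV[R]_k) : bil a b ^+ 2 <= bil a a * bil b b.
Proof.
have [b0|bn0] := eqVneq (bil b b) 0.
  by rewrite b0 mulr0 (bil_eq0 b0) /bil big1 ?expr0n // => i _; rewrite mxE mulr0.
have C0 : 0 < bil b b by rewrite lt_def bn0 bil_ge0.
pose t := bil a b / bil b b.
have tC : t * bil b b = bil a b by rewrite /t mulfVK.
have := bil_ge0 (a - t *: b).
rewrite !bilBl !bilBr !bilZl !bilZr (bilC b a) => h.
nra.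
Qed.

Lemma bil0l (R : realType) k (x : 'cV[R]_k) : bil 0 x = 0.
Proof. by rewrite /bil big1 // => i _; rewrite mxE mul0r. Qed.

Lemma bilQQ (R : realType) k n (Q : 'M[R]_(k, n)) (a b : 'cV[R]_n) :
  bil (Q *m a) (Q *m b) = bil a ((Q^T *m Q) *m b).
Proof. by rewrite bilC bilM bilC mulmxA. Qed.

Lemma opbound_of_max (R : realType) k n (Q : 'M[R]_(k, n)) (y0 : 'cV[R]_n) :
  bil y0 y0 = 1 ->
  (forall y, bil y y = 1 -> bil (Q *m y) (Q *m y) <= bil (Q *m y0) (Q *m y0)) ->
  forall s u v, sing_triple Q s u v ->
  (forall s' a b, sing_triple Q s' a b -> s' <= s) ->
  forall x y, bil x x = 1 -> bil y y = 1 -> bil x (Q *m y) ^+ 2 <= s ^+ 2.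
Proof.
move=> y01 Hmax s u v [s0 _ _ _ _] Hs x y x1 y1.
set l := bil (Q *m y0) (Q *m y0).
have l0 : 0 <= l by apply: bil_ge0.
have hom : forall w, bil (Q *m w) (Q *m w) <= l * bil w w.
  move=> w; have [c0|cn0] := eqVneq (bil w w) 0.
    by rewrite (bil_eq0 c0) mulmx0 bil0l bil0l mulr0.
  have c0 : 0 < bil w w by rewrite lt_def cn0 bil_ge0.
  set c := bil w w in c0 cn0 *.
  pose q := Num.sqrt c.
  have q0 : 0 < q by rewrite /q sqrtr_gt0.
  have qq : q * q = c by rewrite -expr2 /q sqr_sqrtr // ltW.
  have := Hmax (q^-1 *: w).
  rewrite -scalemxAr !bilZl !bilZr -/c.
  have -> : q^-1 * (q^-1 * c) = 1 by rewrite -qq; field; rewrite gt_eqF.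
  move=> /(_ erefl) h.
  have -> : bil (Q *m w) (Q *m w) = (q * q) * (q^-1 * (q^-1 * bil (Q *m w) (Q *m w))).
    by field; rewrite gt_eqF.
  by rewrite qq mulrC ler_wpM2r // ltW.
pose B := Q^T *m Q.
pose z := B *m y0 - l *: y0.
have By0 : B *m y0 = z + l *: y0 by rewrite /z subrK.
have z0 : z = 0.
  apply: bil_eq0; clearbody z.
  suff : 2 * bil z z = 0 by lra.
  apply: (quad0 (b := bil (Q *m z) (Q *m z) - l * bil z z)) => t.
  have h := hom (y0 + t *: z).
  rewrite !mulmxDr -!scalemxAr !bilDl !bilDr !bilZl !bilZr in h.
  rewrite [bil (Q *m z) (Q *m y0)]bilQQ -/B By0 bilDr bilZr in h.
  rewrite [bil (Q *m y0) (Q *m z)]bilC [bil (Q *m z) (Q *m y0)]bilQQ -/B By0 bilDr bilZr in h.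
  rewrite [bil y0 z]bilC y01 -/l in h.
  nra.
have Bl : B *m y0 = l *: y0 by rewrite By0 z0 add0r.
have ls : l <= s ^+ 2.
  have [l0'|lpos] := eqVneq l 0; first by rewrite l0' sqr_ge0.
  have lp : 0 < l by rewrite lt_def lpos l0.
  pose q := Num.sqrt l.
  have q0 : 0 < q by rewrite /q sqrtr_gt0.
  have qq : q * q = l by rewrite -expr2 /q sqr_sqrtr // ltW.
  have qn : q != 0 by rewrite gt_eqF.
  have : q <= s.
    apply: (Hs q (q^-1 *: (Q *m y0)) y0); split => //.
    - by apply/unitE; rewrite bilZl bilZr -/l -qq; field.
    - by rewrite scalerA mulfV // scale1r.
    - by rewrite -scalemxAr mulmxA -/B Bl scalerA -qq mulKf.
  by rewrite -qq expr2 => qs; apply: ler_pM => //; apply: ltW.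
apply: le_trans (CS x (Q *m y)) _; rewrite x1 mul1r.
by apply: le_trans (hom y) _; rewrite y1 mulr1.
Qed.

Definition fr2 (R : realType) m n (X : 'M[R]_(m, n)) : R :=
  \sum_(i < m) \sum_(j < n) X i j ^+ 2.

Lemma supp (R : realType) m n (J1 : {set 'I_m}) (J2 : {set 'I_n}) (X : 'M[R]_(m, n))
  s a b : sing_triple (Pi_J J1 J2 X) s a b ->
  (forall i, i \notin J1 -> a i 0 = 0) /\ (forall j, j \notin J2 -> b j 0 = 0).
Proof.
move=> [s0 _ _ e1 e2]; split.
  move=> i hi; have := congr1 (fun M : 'cV[R]_m => M i 0) e1; rewrite /= !mxE big1.
    by move/esym/eqP; rewrite mulf_eq0 gt_eqF //= => /eqP.
  by move=> j _; rewrite !mxE (negPf hi) /= mul0r.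
move=> j hj; have := congr1 (fun M : 'cV[R]_n => M j 0) e2; rewrite /= !mxE big1.
  by move/esym/eqP; rewrite mulf_eq0 gt_eqF //= => /eqP.
by move=> i _; rewrite !mxE (negPf hj) andbF mul0r.
Qed.

Lemma Pi_uv_rank1 (R : realType) m n (u : 'cV[R]_m) (v : 'cV[R]_n) M :
  Pi_uv u v M = bil u (M *m v) *: (u *m v^T).
Proof.
rewrite /Pi_uv !mulmxA -[u *m u^T *m M]mulmxA -[u *m (u^T *m M) *m v]mulmxA.
rewrite [u^T *m M *m v]mx11_scalar mul_mx_scalar -scalemxAl; congr (_ *: _).
rewrite -mulmxA mxE /bil; apply: eq_bigr => i _; by rewrite !mxE.
Qed.

Lemma split_fr (R : realType) m n (J1 : {set 'I_m}) (J2 : {set 'I_n})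
  (x : 'cV[R]_m) (y : 'cV[R]_n) c P :
  (forall i, i \notin J1 -> x i 0 = 0) -> (forall j, j \notin J2 -> y j 0 = 0) ->
  fr2 (c *: (x *m y^T) - P) = fr2 (c *: (x *m y^T) - Pi_J J1 J2 P) + fr2 (P - Pi_J J1 J2 P).
Proof.
move=> hx hy; rewrite /fr2 -big_split; apply: eq_bigr => i _.
rewrite -big_split; apply: eq_bigr => j _ /=; rewrite !mxE big_ord1 !mxE.
case: (boolP (i \in J1)) => hi; case: (boolP (j \in J2)) => hj /=;
  rewrite ?(hx i hi) ?(hy j hj); ring.
Qed.

Lemma expand_fr (R : realType) m n (x : 'cV[R]_m) (y : 'cV[R]_n) c Q :
  bil x x = 1 -> bil y y = 1 ->
  fr2 (c *: (x *m y^T) - Q) = c ^+ 2 - 2 * c * bil x (Q *m y) + fr2 Q.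
Proof.
move=> x1 y1.
have e : forall i j, (c *: (x *m y^T) - Q) i j ^+ 2 =
   c ^+ 2 * (x i 0 * x i 0 * (y j 0 * y j 0)) - 2 * c * (x i 0 * (Q i j * y j 0)) + Q i j ^+ 2.
  by move=> i j; rewrite !mxE big_ord1 !mxE; ring.
rewrite /fr2; under eq_bigr do under eq_bigr do rewrite e.
have -> : forall (A B C : 'I_m -> 'I_n -> R),
   \sum_i \sum_j (A i j - B i j + C i j) =
   \sum_i \sum_j A i j - \sum_i \sum_j B i j + \sum_i \sum_j C i j.
  move=> A B C; rewrite -sumrB -big_split; apply: eq_bigr => i _.
  by rewrite -sumrB -big_split.
have -> : \sum_i \sum_j c ^+ 2 * (x i 0 * x i 0 * (y j 0 * y j 0)) = c ^+ 2 * (bil x x * bil y y).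
  rewrite /bil big_distrl /= mulr_sumr; apply: eq_bigr => i _.
  by rewrite mulr_sumr mulr_sumr.
have -> : \sum_i \sum_j 2 * c * (x i 0 * (Q i j * y j 0)) = 2 * c * bil x (Q *m y).
  rewrite /bil mulr_sumr; apply: eq_bigr => i _; rewrite mxE mulr_sumr mulr_sumr.
  by apply: eq_bigr => j _.
by rewrite x1 y1 !mulr1.
Qed.

Lemma opbound (R : realType) k n (Q : 'M[R]_(k, n)) s u v :
  sing_triple Q s u v -> (forall s' a b, sing_triple Q s' a b -> s' <= s) ->
  forall x y, bil x x = 1 -> bil y y = 1 -> bil x (Q *m y) ^+ 2 <= s ^+ 2.
Proof.
move=> T Hs; have T' := T; move: T' => [_ _ v1 _ _].
have n0 : (0 < n)%N.
  case: n Q v T Hs v1 => // Q v _ _; rewrite /unit_vec big_ord0 => /eqP.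
  by rewrite eq_sym oner_eq0.
have [r0 [r01 r0max]] := exists_max_rV Q n0.
have bilQ : forall y : 'cV[R]_n, bil (Q *m y) (Q *m y) = \sum_a (\sum_j Q a j * y^T 0 j) ^+ 2.
  move=> y; rewrite /bil; apply: eq_bigr => a _; rewrite expr2 !mxE.
  by congr (_ * _); apply: eq_bigr => j _; rewrite !mxE.
have bilT : forall y : 'cV[R]_n, bil y y = \sum_i y^T 0 i ^+ 2.
  by move=> y; rewrite /bil; apply: eq_bigr => i _; rewrite !mxE expr2.
apply: (@opbound_of_max _ _ _ Q r0^T) T Hs.
  by rewrite bilT trmxK.
move=> y y1; rewrite !bilQ trmxK; apply: r0max; by rewrite -bilT.
Qed.

Theorem lemma6 (R : realType) (m n : nat) (P Xi : 'M[R]_(m, n))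
  (J1 : {set 'I_m}) (J2 : {set 'I_n})
  (u uh : 'cV[R]_m) (v vh : 'cV[R]_n) :
  top_sing_pair (Pi_J J1 J2 (P + Xi)) uh vh ->
  top_sing_pair (Pi_J J1 J2 P) u v ->
  frob (Pi_uv u v (Pi_J J1 J2 P) - P) <= frob (Pi_uv uh vh (Pi_J J1 J2 P) - P) /\
  frob (Pi_uv uh vh (Pi_J J1 J2 P) - P) <= frob (Pi_uv uh vh (Pi_J J1 J2 (P + Xi)) - P).
Proof.
move=> [sh [Th _]] [s [T Hs]].
have [su sv] := supp T; have [suh svh] := supp Th.
have dh := opbound T Hs.
move: Th T => [sh0 /unitE uh1 /unitE vh1 eh1 eh2] [s0 /unitE u1 /unitE v1 e1 e2].
have frobE : forall X : 'M[R]_(m, n), frob X = Num.sqrt (fr2 X) by [].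
rewrite !frobE !Pi_uv_rank1.
rewrite (split_fr (bil uh (Pi_J J1 J2 P *m vh)) P suh svh).
rewrite (split_fr (bil uh (Pi_J J1 J2 (P + Xi) *m vh)) P suh svh).
rewrite (split_fr (bil u (Pi_J J1 J2 P *m v)) P su sv).
rewrite !expand_fr // e1 bilZr u1 mulr1.
have := dh uh vh uh1 vh1.
set d := bil uh (Pi_J J1 J2 P *m vh).
set dA := bil uh (Pi_J J1 J2 (P + Xi) *m vh).
move=> hd; split; apply: ler_wsqrtr; rewrite !lerD2r.
  have -> : s ^+ 2 - 2 * s * s = - s ^+ 2 by ring.
  have -> : d ^+ 2 - 2 * d * d = - d ^+ 2 by ring.
  by rewrite lerN2.
have -> : d ^+ 2 - 2 * d * d = - d ^+ 2 by ring.
rewrite -subr_ge0.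
have -> : dA ^+ 2 - 2 * dA * d - - d ^+ 2 = (dA - d) ^+ 2 by ring.
exact: sqr_ge0.
Qed.
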